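(* Let $G$ be a graph on $n'\geq n$ vertices and let $H\subseteq G$ be a complete subgraph $H\cong K_n$. Consider a game on $E(G)$ in which Red and Blue alternately claim previously unclaimed edges, one per turn, and suppose that at the moment Red starts claiming edges there is a vertex $v\in V(H)$ with $d_B(v)\geq 1$, but Blue has claimed at most one edge of $E(H)$. Then Red can ensure that, for all $1\leq j\leq n/2-1$, immediately after her $j$-th move her graph (within $H$) is a matching consisting of $j$ edges and $D_j\leq 1$. Moreover, if $D_k=1$ for some $1\leq k\leq n/2-1$, then $D_j=1$ for all $k\leq j\leq n/2-1$.
   Context: $R$ and $B$ denote the graphs formed by the edges claimed so far by Red and Blue respectively; $d_B(v)$ is the degree of $v$ in $B$. For $v\in V(H)$, $d_B^H(v)$ (resp. $d_R^H(v)$) is the number of Blue (resp. Red) edges joining $v$ to other vertices of $H$. A vertex $v\in V(H)$ is H-distinct if $d_B^H(v)\geq 1$ and $d_R^H(v)=0$. $D_j$ denotes the number of H-distinct vertices immediately after Red's $j$-th move. *)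

(* Defs.v *)
From mathcomp Require Import all_boot.
Set Implicit Arguments. Unset Strict Implicit. Unset Printing Implicit Defensive.

Section Game.
Variable V : finType.
Implicit Types (EG R B M : {set {set V}}) (S : {set V}) (e : {set V}).

Definition simple_graph EG := forall e, e \in EG -> #|e| = 2.

(* H = G[S] is complete: every pair of distinct vertices of S is an edge of G *)
Definition complete_on EG S :=
  forall x y, x \in S -> y \in S -> x != y -> [set x; y] \in EG.

(* d_B(v) >= 1 in the whole graph *)
Definition has_blue_edge B (v : V) := exists2 e, e \in B & v \in e.

Definition degH (X : {set {set V}}) S (v : V) := #|[set e in X | (e \subset S) && (v \in e)]|.

Definition insideH (X : {set {set V}}) S : {set {set V}} := [set e in X | e \subset S].

Definition Hdistinct R B S (v : V) :=
  [&& v \in S, 0 < degH B S v & degH R S v == 0].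

Definition Dcount R B S := #|[set v | Hdistinct R B S v]|.

Definition is_matching M :=
  forall e f, e \in M -> f \in M -> e != f -> [disjoint e & f].

(* The play from the moment Red starts: Red moves first, then Blue, alternately.
   Red's (deterministic, history-dependent) strategy sigma maps the list of
   Blue's moves made so far (since Red started) to Red's next edge.
   b i (i = 0,1,...) is Blue's reply to Red's (i+1)-th move. *)
Definition red_move (sigma : seq {set V} -> {set V}) (b : nat -> {set V}) (j : nat) :=
  sigma (map b (iota 0 j.-1)).

(* Red's edges after her j-th move (moves 1..j); Red had no edges initially *)
Definition red_after sigma b (j : nat) : {set {set V}} :=
  [set red_move sigma b (nat_of_ord k).+1 | k : 'I_j].

Definition blue_after (B0 : {set {set V}}) (b : nat -> {set V}) (m : nat) : {set {set V}} :=
  B0 :|: [set b (nat_of_ord i) | i : 'I_m].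

Definition red_legal EG B0 sigma b (j : nat) :=
  (red_move sigma b j \in EG) /\
  (red_move sigma b j \notin red_after sigma b j.-1 :|: blue_after B0 b j.-1).

Definition blue_legal EG B0 sigma b (i : nat) :=
  (b i \in EG) /\ (b i \notin red_after sigma b i.+1 :|: blue_after B0 b i).

(* D_j : number of H-distinct vertices immediately after Red's j-th move *)
Definition D_after B0 sigma b S (j : nat) :=
  Dcount (red_after sigma b j) (blue_after B0 b j.-1) S.

End Game.

(* Main.v *)
Require Import Defs.
From mathcomp Require Import all_boot.
From mathcomp Require Import zify.
Set Implicit Arguments. Unset Strict Implicit. Unset Printing Implicit Defensive.

Lemma imset_ordS (T : finType) (F : nat -> T) j :
  [set F (nat_of_ord k) | k : 'I_j.+1] = F j |: [set F (nat_of_ord k) | k : 'I_j].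
Proof.
apply/setP=> x; apply/imsetP/setU1P.
- case=> k _ ->; case: (ltnP k j) => hk.
  + by right; apply/imsetP; exists (Ordinal hk).
  + by left; have -> : nat_of_ord k = j by have := ltn_ord k; lia.
- case=> [->|/imsetP [k _ ->]]; first by exists ord_max.
  by exists (widen_ord (leqnSn j) k).
Qed.

Section Pf.
Variables (V : finType) (S : {set V}) (B0 : {set {set V}}).
Implicit Types (X R B : {set {set V}}) (e b f : {set V}).

Lemma mydisj (A B : {set V}) : (forall v, v \in A -> v \notin B) -> [disjoint A & B].
Proof.
move=> h; rewrite -setI_eq0; apply/eqP/setP => v; rewrite !inE.
by case vA: (v \in A) => //=; rewrite (negbTE (h v vA)).
Qed.

Lemma degH_pos X v :
  reflect (exists2 f, f \in X & (f \subset S) && (v \in f)) (0 < degH X S v).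
Proof.
rewrite /degH card_gt0; apply: (iffP (set0Pn _)) => [[f]|[f fX hf]].
- by rewrite inE => /andP[fX hf]; exists f.
- by exists f; rewrite inE fX.
Qed.

Lemma degH0 X v : (degH X S v == 0) = ~~ (0 < degH X S v).
Proof. by rewrite lt0n negbK. Qed.

Lemma degH_add X e v :
  (0 < degH (e |: X) S v) = ((e \subset S) && (v \in e)) || (0 < degH X S v).
Proof.
apply/degH_pos/orP.
- case=> f; rewrite in_setU1 => /orP[/eqP->|fX] hf; first by left.
  by right; apply/degH_pos; exists f.
- case=> [h|/degH_pos[f fX hf]]; first by exists e; rewrite ?setU11.
  by exists f; rewrite ?setU1r.
Qed.

Definition Uset (R : {set {set V}}) := [set v in S | degH R S v == 0].
Definition Pset (R B : {set {set V}}) := [set v | Hdistinct R B S v].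

Lemma UsetP R v : v \in Uset R -> v \in S /\ forall f, f \in R -> f \subset S -> v \notin f.
Proof.
rewrite inE => /andP[vS]; rewrite degH0 => /negP h; split=> // f fR fS.
apply/negP => vf; apply: h; apply/degH_pos; exists f => //; by rewrite fS vf.
Qed.

Lemma PsetE R B v : (v \in Pset R B) = (v \in Uset R) && (0 < degH B S v).
Proof.
rewrite !inE /Hdistinct.
by case: (v \in S); case: (0 < degH B S v); case: (degH R S v == 0).
Qed.

Lemma PsubU R B : Pset R B \subset Uset R.
Proof. by apply/subsetP => v; rewrite PsetE => /andP[]. Qed.

Lemma set2_sub x y (A : {set V}) : x \in A -> y \in A -> [set x; y] \subset A.
Proof. by move=> hx hy; apply/subsetP => v; rewrite !inE => /orP[]/eqP->. Qed.

Lemma blue_in_P R B x y : x \in Uset R -> y \in Uset R -> [set x; y] \in B ->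
  x \in Pset R B.
Proof.
move=> hx hy hB; rewrite PsetE hx /=; apply/degH_pos; exists [set x; y] => //.
rewrite set21 andbT; apply: set2_sub; [exact: (UsetP hx).1 | exact: (UsetP hy).1].
Qed.

Lemma Uset_add R e : e \subset S -> Uset (e |: R) = Uset R :\: e.
Proof.
move=> eS; apply/setP => v; rewrite /Uset !inE !degH0 degH_add eS /=.
by case: (v \in S); case: (v \in e); case: (0 < degH R S v).
Qed.

Lemma Pset_red R B e : e \subset S -> Pset (e |: R) B = Pset R B :\: e.
Proof.
move=> eS; apply/setP => v; rewrite in_setD !PsetE Uset_add // in_setD.
by case: (v \in e); case: (v \in Uset R).
Qed.

Lemma Pset_blue R B b v :
  (v \in Pset R (b |: B)) = (v \in Pset R B) || [&& v \in Uset R, b \subset S & v \in b].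
Proof.
rewrite !PsetE degH_add.
by case: (v \in Uset R); case: (b \subset S); case: (v \in b); case: (0 < degH B S v).
Qed.

Lemma setD2 (A : {set V}) x y : A :\: [set x; y] = A :\ x :\ y.
Proof.
apply/setP=> v; rewrite !inE.
by case: (v == x); case: (v == y); case: (v \in A).
Qed.

Lemma cardD1in (A : {set V}) x : x \in A -> #|A :\ x| = #|A|.-1.
Proof. by move=> xA; rewrite (cardsD1 x A) xA add1n. Qed.

Lemma ex_in (A : {set V}) : 0 < #|A| -> exists x, x \in A.
Proof. by rewrite card_gt0 => /set0Pn. Qed.

Definition struct R B :=
  #|Pset R B| <= 2 \/ exists2 z, z \in Pset R B &
    #|Pset R B :\ z| <= 2 /\ (forall u, u \in Pset R B -> u != z -> [set z; u] \notin B).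

Definition good R B (x y : V) :=
  [&& x != y, x \in Uset R, y \in Uset R, [set x; y] \notin B,
      #|Pset R B :\: [set x; y]| <= 1 &
      (Pset R B != set0) ==> (Pset R B :\: [set x; y] != set0)].

Definition choose R B := if [pick p | good R B p.1 p.2] is Some p then [set p.1; p.2] else set0.

Lemma good_exists R B : 4 <= #|Uset R| -> struct R B -> exists x y, good R B x y.
Proof.
move=> hU hs.
have hB x y : x \in Uset R -> y \in Uset R -> x \notin Pset R B -> [set x; y] \notin B.
  by move=> hx hy hxP; apply/negP => hxy; move/negP: hxP; apply; exact: blue_in_P hxy.
have hB' x y : x \in Uset R -> y \in Uset R -> y \notin Pset R B -> [set x; y] \notin B.
  by move=> hx hy hyP; rewrite setUC; exact: hB.
have PU := subsetP (PsubU R B).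
set P := Pset R B in hs hB hB' PU *; set U := Uset R in hB hB' PU hU *.
have cU x : x \in U -> 3 <= #|U :\ x| by move=> xU; rewrite cardD1in //; lia.
case: (leqP #|P| 2) => hP2; last first.
  case: hs => [|[z zP [hz hzu]]]; first by rewrite -/P; lia.
  rewrite -/P in zP hz hzu; have hPz := cardD1in zP.
  have [u uPz] : exists u, u \in P :\ z by apply: ex_in; rewrite hPz; lia.
  have uP : u \in P by move: uPz; rewrite in_setD1 => /andP[].
  have uz : u != z by move: uPz; rewrite in_setD1 => /andP[].
  have hPzu := cardD1in uPz.
  exists z, u; rewrite /good eq_sym uz !PU // hzu // setD2 -/P -card_gt0 /=.
  apply/andP; split; first lia. apply/implyP => _; rewrite -card_gt0; lia.
case hP: #|P| hP2 => [|[|[|k]]] // _.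
- have /eqP P0 : P == set0 by rewrite -cards_eq0 hP.
  have [x xU] : exists x, x \in U by apply: ex_in; lia.
  have [y yUx] : exists y, y \in U :\ x by apply: ex_in; have := cU x xU; lia.
  move: yUx; rewrite in_setD1 => /andP[yx yU].
  exists x, y; rewrite /good -/P eq_sym yx xU yU hB //=; last by rewrite P0 inE.
  by rewrite P0 set0D cards0 eqxx.
- have /cards1P [z Pz] : #|P| == 1 by rewrite hP.
  have zU : z \in U by apply: PU; rewrite Pz set11.
  have [x xUz] : exists x, x \in U :\ z by apply: ex_in; have := cU z zU; lia.
  move: xUz; rewrite in_setD1 => /andP[xz xU].
  have [y yUx] : exists y, y \in U :\ z :\ x.
    by apply: ex_in; rewrite cardD1in; [have := cU z zU; lia | rewrite in_setD1 xz].
  move: yUx; rewrite !in_setD1 => /and3P[yx yz yU].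
  have E : P :\: [set x; y] = P.
    rewrite setD2 Pz; apply/setP => v; rewrite !inE; case: (eqVneq v z) => [->|_]; last by rewrite !andbF.
    by rewrite andbT; apply/andP; split; rewrite eq_sym.
  exists x, y; rewrite /good -/P eq_sym yx xU yU hB //=; last by rewrite Pz inE.
  by rewrite E hP /= -card_gt0 hP.
- have [z zP] : exists z, z \in P by apply: ex_in; lia.
  have hUP : 2 <= #|U :\: P|.
    by rewrite cardsD (setIidPr (PsubU R B)); rewrite -/P; lia.
  have [u uUP] : exists u, u \in U :\: P by apply: ex_in; lia.
  move: uUP; rewrite in_setD => /andP[uP uU].
  have zu : z != u by apply/eqP => e; move: uP; rewrite -e zP.
  have h1 : #|P :\ z :\ u| = #|P :\ z|.
    by have := cardsD1 u (P :\ z); rewrite in_setD1 (negbTE uP) andbF add0n.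
  have h2 := cardD1in zP.
  exists z, u; rewrite /good !setD2 -/P zu PU // uU (hB' z u (PU _ zP) uU uP) h1 h2 hP /=.
  by apply/implyP => _; rewrite -card_gt0 h1 h2 hP.
Qed.

Lemma choose_spec R B : 4 <= #|Uset R| -> struct R B ->
  exists x y, good R B x y /\ choose R B = [set x; y].
Proof.
move=> hU hs; rewrite /choose; case: pickP => [[x y] g | none]; first by exists x, y.
by have [x [y g]] := good_exists hU hs; move: (none (x, y)); rewrite /= g.
Qed.

Lemma red_step EG R B : complete_on EG S -> 4 <= #|Uset R| ->
  (forall f, f \in R -> f \subset S) -> is_matching R -> struct R B ->
  [/\ choose R B \in EG, choose R B \notin R :|: B,
     #|Uset (choose R B |: R)| + 2 = #|Uset R|,
     (forall f, f \in choose R B |: R -> f \subset S) &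
   [/\ is_matching (choose R B |: R), #|choose R B |: R| = #|R|.+1,
     #|Pset (choose R B |: R) B| <= 1 &
     (Pset R B != set0 -> Pset (choose R B |: R) B != set0)]].
Proof.
move=> hG hU hRS hM hs.
have [x [y [g ->]]] := choose_spec hU hs.
case/and5P: g => xy xU yU nB /andP[hc himp].
have [xS hx] := UsetP xU; have [yS hy] := UsetP yU.
have eS : [set x; y] \subset S := set2_sub xS yS.
have disj f : f \in R -> [disjoint [set x; y] & f].
  move=> fR; apply: mydisj => v; rewrite !inE => /orP[]/eqP->.
  - exact: hx fR (hRS f fR).
  - exact: hy fR (hRS f fR).
have eR : [set x; y] \notin R.
  apply/negP => eR; have := disjointFr (disj _ eR) (set21 x y).
  by rewrite set21.
split.
- exact: hG.
- by rewrite in_setU negb_or eR.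
- rewrite Uset_add // cardsD (setIidPr (set2_sub xU yU)) cards2 xy; lia.
- move=> f; rewrite in_setU1 => /orP[/eqP->|]; [exact: eS | exact: hRS].
split.
- move=> e1 f1; rewrite !in_setU1 => /orP[/eqP->|e1R] /orP[/eqP->|f1R] ne.
  + by rewrite eqxx in ne.
  + exact: disj.
  + by rewrite disjoint_sym; apply: disj.
  + exact: hM.
- by rewrite cardsU1 eR.
- by rewrite Pset_red.
- by rewrite Pset_red // => /(implyP himp).
Qed.

Lemma Pset_blue_sub R B b v : v \in Pset R B -> v \in Pset R (b |: B).
Proof. by rewrite Pset_blue => ->. Qed.

Lemma blue_struct EG R B b : simple_graph EG -> #|Pset R B| <= 1 -> b \in EG ->
  struct R (b |: B).
Proof.
move=> hsG hQ bG.
have sub v : v \in Pset R (b |: B) -> v \in Pset R B \/ v \in b.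
  by rewrite Pset_blue => /orP[|/and3P[_ _]]; [left|right].
have Qz z w : z \in Pset R B -> w \in Pset R B -> w = z.
  move=> zQ wQ; apply/eqP; apply: contraTT hQ => wz.
  rewrite -ltnNge (cardsD1 z (Pset R B)) zQ add1n ltnS card_gt0.
  by apply/set0Pn; exists w; rewrite in_setD1 wz wQ.
have hb2 : #|b| = 2 := hsG b bG.
case: (leqP #|Pset R (b |: B)| 2) => h3; [by left | right].
have [z zQ] : exists z, z \in Pset R B.
  apply/set0Pn/negP => /eqP Q0; move: h3; rewrite ltnNge; apply/negP/negPn.
  rewrite -hb2; apply: subset_leq_card; apply/subsetP => v /sub [|//].
  by rewrite Q0 inE.
have zb : z \notin b.
  apply/negP => zb; move: h3; rewrite ltnNge; apply/negP/negPn.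
  rewrite -hb2; apply: subset_leq_card; apply/subsetP => v /sub [vQ|//].
  by rewrite (Qz z v zQ vQ).
exists z; first exact: Pset_blue_sub.
split.
- rewrite -hb2; apply: subset_leq_card; apply/subsetP => v.
  rewrite in_setD1 => /andP[vz /sub [vQ|//]].
  by rewrite (Qz z v zQ vQ) eqxx in vz.
- move=> u uP uz; rewrite in_setU1 negb_or; apply/andP; split.
  + by apply/negP => /eqP eb; move: zb; rewrite -eb set21.
  + apply/negP => hzu.
    have PU := subsetP (PsubU R (b |: B)).
    have uQ : u \in Pset R B.
      apply: (blue_in_P (PU _ uP) (PU _ (Pset_blue_sub b zQ))).
      by rewrite setUC.
    by move: uz; rewrite (Qz z u zQ uQ) eqxx.
Qed.

Fixpoint Rb (b : nat -> {set V}) k : {set {set V}} :=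
  if k is k'.+1 then choose (Rb b k') (blue_after B0 b k') |: Rb b k' else set0.

Definition sigma (s : seq {set V}) : {set V} :=
  choose (Rb (fun i => nth set0 s i) (size s)) (blue_after B0 (fun i => nth set0 s i) (size s)).

Lemma blue_after_ext (b b' : nat -> {set V}) m : (forall i, i < m -> b i = b' i) ->
  blue_after B0 b m = blue_after B0 b' m.
Proof.
move=> h; rewrite /blue_after; congr (_ :|: _); apply: eq_imset => i; exact: h (ltn_ord i).
Qed.

Lemma Rb_ext (b b' : nat -> {set V}) k : (forall i, i < k -> b i = b' i) -> Rb b k = Rb b' k.
Proof.
elim: k => [|k IH] h //=.
have h' : forall i, i < k -> b i = b' i by move=> i hi; apply: h; lia.
by rewrite IH // (blue_after_ext h').
Qed.

Lemma blue_afterS (b : nat -> {set V}) m : blue_after B0 b m.+1 = b m |: blue_after B0 b m.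
Proof. by rewrite /blue_after (imset_ordS b) setUCA. Qed.

Lemma red_move_eq (b : nat -> {set V}) k : red_move sigma b k.+1 = choose (Rb b k) (blue_after B0 b k).
Proof.
rewrite /red_move /sigma /= size_map size_iota.
have h : forall i, i < k -> nth set0 (map b (iota 0 k)) i = b i.
  by move=> i hi; rewrite (nth_map 0) ?size_iota // nth_iota.
by rewrite (Rb_ext h) (blue_after_ext h).
Qed.

Lemma red_after_eq (b : nat -> {set V}) j : red_after sigma b j = Rb b j.
Proof.
elim: j => [|j IH].
  by apply/setP => x; rewrite in_set0; apply/negP => /imsetP [[k hk]].
rewrite /red_after (imset_ordS (fun i => red_move sigma b i.+1)) -/(red_after sigma b j).
by rewrite IH red_move_eq.
Qed.

Lemma blue_after0 (b : nat -> {set V}) : blue_after B0 b 0 = B0.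
Proof.
rewrite /blue_after; have -> : [set b (nat_of_ord i) | i : 'I_0] = set0; last by rewrite setU0.
by apply/setP => x; rewrite in_set0; apply/negP => /imsetP [[k hk]].
Qed.

Lemma P0_sub v : v \in Pset set0 B0 -> exists2 f, f \in insideH B0 S & v \in f.
Proof.
by rewrite PsetE => /andP[_ /degH_pos [f fB /andP[fS vf]]]; exists f; rewrite ?inE ?fB ?fS.
Qed.

Lemma main_ind EG (b : nat -> {set V}) : simple_graph EG -> complete_on EG S ->
  B0 \subset EG -> #|insideH B0 S| <= 1 ->
  forall j, j.*2 + 2 <= #|S| -> (forall i, i.+1 < j -> b i \in EG) ->
  [/\ #|Uset (Rb b j)| + j.*2 = #|S|, (forall f, f \in Rb b j -> f \subset S),
     #|Rb b j| = j, is_matching (Rb b j) &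
   [/\ (j = 0 \/ b j.-1 \in EG) -> struct (Rb b j) (blue_after B0 b j),
     0 < j -> choose (Rb b j.-1) (blue_after B0 b j.-1) \in EG /\
              choose (Rb b j.-1) (blue_after B0 b j.-1) \notin Rb b j.-1 :|: blue_after B0 b j.-1 &
     0 < j -> #|Pset (Rb b j) (blue_after B0 b j.-1)| <= 1 /\
       (forall k, 0 < k -> k <= j -> #|Pset (Rb b k) (blue_after B0 b k.-1)| = 1 ->
          #|Pset (Rb b j) (blue_after B0 b j.-1)| = 1)]].
Proof.
move=> hsG hG hB0 hins; elim=> [|j IH] hj hb.
  have U0 : Uset set0 = S.
    apply/setP => v; rewrite /Uset inE degH0.
    have -> : (0 < degH set0 S v) = false by apply/negP => /degH_pos [f]; rewrite in_set0.
    by rewrite andbT.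
  split => //=.
  - by rewrite U0 addn0.
  - by move=> f; rewrite in_set0.
  - by rewrite cards0.
  - by move=> e f; rewrite in_set0.
  split => // _; left; rewrite blue_after0.
  case: (posnP #|insideH B0 S|) => h0.
    have -> : Pset set0 B0 = set0.
      apply/setP => v; rewrite in_set0; apply/negP => /P0_sub [f fI _].
      by move/eqP: h0; rewrite cards_eq0 => /eqP h0; move: fI; rewrite h0 inE.
    by rewrite cards0.
  have /cards1P [f0 hf0] : #|insideH B0 S| == 1 by rewrite eqn_leq hins h0.
  have f0B : f0 \in B0 by have := set11 f0; rewrite -hf0 inE => /andP[].
  rewrite -(hsG f0 (subsetP hB0 _ f0B)); apply: subset_leq_card; apply/subsetP => v.
  by case/P0_sub => f; rewrite hf0 inE => /eqP ->.
have hj' : j.*2 + 2 <= #|S| by lia.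
have hb' : forall i, i.+1 < j -> b i \in EG by move=> i hi; apply: hb; lia.
have [IU IS Ic IM [Istr _ ID]] := IH hj' hb'.
have str : struct (Rb b j) (blue_after B0 b j).
  apply: Istr; case: (posnP j) => [->|jp]; [by left | right; apply: hb; lia].
have hU4 : 4 <= #|Uset (Rb b j)| by lia.
have [eG eN hU' hS' [hM' hc' hP' hne]] := red_step hG hU4 IS IM str.
split => /=.
- lia.
- exact: hS'.
- by rewrite hc' Ic.
- exact: hM'.
split => /=.
- by case=> [//|bj]; rewrite blue_afterS; exact: blue_struct hsG hP' bj.
- by [].
move=> _; split => // k k0 kj hk.
have [ek|klt] : k = j.+1 \/ k <= j by lia.
  by move: hk; rewrite ek.
have jp : 0 < j by lia.
have [_ IDm] := ID jp.
have Dj := IDm k k0 klt hk.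
have ej : blue_after B0 b j = b j.-1 |: blue_after B0 b j.-1 by rewrite -blue_afterS prednK.
have [v vP] := ex_in (eq_leq (esym Dj)).
have ne : Pset (Rb b j) (blue_after B0 b j) != set0.
  by apply/set0Pn; exists v; rewrite ej; exact: Pset_blue_sub.
by apply/eqP; rewrite eqn_leq hP' card_gt0 (hne ne).
Qed.

End Pf.

Theorem lemma2p4 (V : finType) (EG : {set {set V}}) (S : {set V}) (n : nat)
    (B0 : {set {set V}}) :
  simple_graph EG ->
  #|S| = n ->
  complete_on EG S ->
  B0 \subset EG ->
  (exists2 v, v \in S & has_blue_edge B0 v) ->
  #|insideH B0 S| <= 1 ->
  exists sigma : seq {set V} -> {set V},
    forall (b : nat -> {set V}) (j : nat),
      0 < j -> j.*2 + 2 <= n ->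
      (forall i, i < j.-1 -> blue_legal EG B0 sigma b i) ->
      [/\ red_legal EG B0 sigma b j,
          #|insideH (red_after sigma b j) S| = j,
          is_matching (insideH (red_after sigma b j) S),
          D_after B0 sigma b S j <= 1
        & forall k, 0 < k -> k <= j -> D_after B0 sigma b S k = 1 ->
            D_after B0 sigma b S j = 1].
Proof.
move=> hsG hn hG hB0 _ hins.
exists (sigma S B0) => b [//|j] _ hj hbl.
have hb : forall i, i.+1 < j.+1 -> b i \in EG.
  move=> i hi; have hi' : i < j.+1.-1 by rewrite /=; lia.
  by case: (hbl i hi').
subst n.
have [hU hS hc hM [_ hleg hD]] := @main_ind V S B0 EG b hsG hG hB0 hins _ hj hb.
have ins : insideH (Rb S B0 b j.+1) S = Rb S B0 b j.+1.
  by apply/setP => e; rewrite inE; case eR: (e \in _) => //=; exact: hS.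
split.
- rewrite /red_legal red_move_eq -[j.+1.-1]/j red_after_eq; exact: hleg.
- by rewrite red_after_eq ins.
- by rewrite red_after_eq ins.
- by rewrite /D_after /Dcount red_after_eq; have := (hD erefl).1; rewrite /Pset.
- move=> k k0 kj; rewrite /D_after /Dcount !red_after_eq.
  by have := (hD erefl).2 k k0 kj; rewrite /Pset.
Qed.
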